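(* Let $(H,\mu,\eta,\Delta,\varepsilon,s)$ be a Hopf algebra in a strict symmetric monoidal category $\mathcal{C}$ which admits a Hopf-Frobenius algebra structure. Then this structure is unique up to invertible scalar: if $(\delta_g,\varepsilon_g,\mu_r,\eta_r)$ and $(\delta_g',\varepsilon_g',\mu_r',\eta_r')$ are two choices of green comonoid and red monoid which, together with green monoid $(\mu,\eta)$, red comonoid $(\Delta,\varepsilon)$ and antipode $s$, form Hopf-Frobenius algebras, then each of $\delta_g',\varepsilon_g',\mu_r',\eta_r'$ is equal to the corresponding morphism $\delta_g,\varepsilon_g,\mu_r,\eta_r$ tensored with some invertible scalar $I\to I$.
   Context: $\mathcal{C}$ is a strict symmetric monoidal category with unit object $I$ and symmetry $\sigma$; scalars are morphisms $I\to I$. A Hopf algebra $(H,\mu,\eta,\Delta,\varepsilon,s)$: an object $H$ with an associative unital monoid $(\mu,\eta)$ and coassociative counital comonoid $(\Delta,\varepsilon)$ satisfying $\Delta\circ\mu=(\mu\otimes\mu)\circ(\mathrm{id}\otimes\sigma_{H,H}\otimes\mathrm{id})\circ(\Delta\otimes\Delta)$, $\Delta\circ\eta=\eta\otimes\eta$, $\varepsilon\circ\mu=\varepsilon\otimes\varepsilon$, $\varepsilon\circ\eta=\mathrm{id}_I$, and an antipode $s$ with $\mu\circ(s\otimes\mathrm{id})\circ\Delta=\eta\circ\varepsilon=\mu\circ(\mathrm{id}\otimes s)\circ\Delta$. A Frobenius algebra is a monoid $(m,u)$ and comonoid $(d,c)$ on the same object with $(\mathrm{id}\otimes m)\circ(d\otimes\mathrm{id})=d\circ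 m=(m\otimes\mathrm{id})\circ(\mathrm{id}\otimes d)$. A pre-Hopf-Frobenius algebra consists of an object $H$ with a green monoid $(\mu_g,\eta_g)$, green comonoid $(\delta_g,\varepsilon_g)$, red monoid $(\mu_r,\eta_r)$, red comonoid $(\delta_r,\varepsilon_r)$ and an endomorphism $s$ such that $(\mu_g,\eta_g,\delta_g,\varepsilon_g)$ and $(\mu_r,\eta_r,\delta_r,\varepsilon_r)$ are Frobenius algebras and $(\mu_g,\eta_g,\delta_r,\varepsilon_r,s)$ is a Hopf algebra. Write $e_g:=\varepsilon_g\circ\mu_g$, $d_g:=\delta_g\circ\eta_g$ (green cup and cap) and $e_r:=\varepsilon_r\circ\mu_r$, $d_r:=\delta_r\circ\eta_r$ (red cup and cap). A Hopf-Frobenius algebra is a pre-Hopf-Frobenius algebra such that $s=(\mathrm{id}_H\otimes e_r)\circ(d_g\otimes\mathrm{id}_H)$ and such that, with $s':=(e_g\otimes\mathrm{id}_H)\circ(\mathrm{id}_H\otimes d_r)$, the tuple $(\mu_r,\eta_r,\delta_g,\varepsilon_g,s')$ is a Hopf algebra. A Hopf algebra $(H,\mu,\eta,\Delta,\varepsilon,s)$ admits a Hopf-Frobenius algebra structure if there exist $\delta_g,\varepsilon_g,\mu_r,\eta_r$ such that the data with green monoid $(\mu,\eta)$, red comonoid $(\Delta,\varepsilon)$ and antipode $s$ is a Hopf-Frobenius algebra. *)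

(* Defs.v *)
Set Implicit Arguments.
Unset Strict Implicit.

Definition castH {O : Type} (Hom : O -> O -> Type) {A A' B B' : O}
  (e1 : A = A') (e2 : B = B') (f : Hom A B) : Hom A' B' :=
  match e1 in _ = X return Hom X B' with
  | eq_refl => match e2 in _ = Y return Hom A Y with eq_refl => f end
  end.
Arguments castH {O} Hom {A A' B B'} e1 e2 f.

(* Strictness: the associativity and unit
   laws hold as equalities of objects, and tensoring of morphisms is strictly
   associative and unital (up to the induced transports). *)
Record SMC := {
  Ob : Type;
  Hom : Ob -> Ob -> Type;
  idm : forall A, Hom A A;
  comp : forall A B C, Hom B C -> Hom A B -> Hom A C;
  tens : Ob -> Ob -> Ob;
  unitO : Ob;
  tensm : forall A B C D, Hom A B -> Hom C D -> Hom (tens A C) (tens B D);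
  sym : forall A B, Hom (tens A B) (tens B A);
  tens_assoc : forall A B C, tens (tens A B) C = tens A (tens B C);
  tens_unitl : forall A, tens unitO A = A;
  tens_unitr : forall A, tens A unitO = A;
  comp_assoc : forall A B C D (f : Hom A B) (g : Hom B C) (h : Hom C D),
      comp h (comp g f) = comp (comp h g) f;
  comp_idl : forall A B (f : Hom A B), comp (idm B) f = f;
  comp_idr : forall A B (f : Hom A B), comp f (idm A) = f;
  tensm_id : forall A B, tensm (idm A) (idm B) = idm (tens A B);
  tensm_comp : forall A B C A' B' C' (f : Hom A B) (g : Hom B C)
      (f' : Hom A' B') (g' : Hom B' C'),
      tensm (comp g f) (comp g' f') = comp (tensm g g') (tensm f f');
  tensm_assoc : forall A B C A' B' C' (f : Hom A A') (g : Hom B B') (h : Hom C C'),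
      castH Hom (tens_assoc A B C) (tens_assoc A' B' C') (tensm (tensm f g) h)
      = tensm f (tensm g h);
  tensm_unitl : forall A B (f : Hom A B),
      castH Hom (tens_unitl A) (tens_unitl B) (tensm (idm unitO) f) = f;
  tensm_unitr : forall A B (f : Hom A B),
      castH Hom (tens_unitr A) (tens_unitr B) (tensm f (idm unitO)) = f;
  sym_nat : forall A B C D (f : Hom A B) (g : Hom C D),
      comp (sym B D) (tensm f g) = comp (tensm g f) (sym A C);
  sym_inv : forall A B, comp (sym B A) (sym A B) = idm (tens A B);
  (* hexagon: sym_{A, B(x)C} = (id_B (x) sym_{A,C}) o (sym_{A,B} (x) id_C),
     with the (identity) associativity transports written out *)
  sym_hex : forall A B C,
      sym A (tens B C) =
      comp (castH Hom (tens_assoc B C A) eq_refl (idm (tens (tens B C) A)))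
      (comp (tensm (idm B) (sym A C))
      (comp (castH Hom eq_refl (tens_assoc B A C) (idm (tens (tens B A) C)))
      (comp (tensm (sym A B) (idm C))
            (castH Hom (tens_assoc A B C) eq_refl (idm (tens (tens A B) C))))))
}.

Arguments Hom : clear implicits.
Arguments idm {s} A.
Arguments comp {s A B C} _ _.
Arguments tens {s} _ _.
Arguments unitO {s}.
Arguments tensm {s A B C D} _ _.
Arguments sym {s} A B.
Arguments tens_assoc {s} A B C.
Arguments tens_unitl {s} A.
Arguments tens_unitr {s} A.

Section Hopf.
Variable C : SMC.
Notation Hm := (Hom C).
Local Infix "⊗" := tens (at level 40, left associativity).
Local Notation I := (@unitO C).
Local Infix "∘" := comp (at level 50, left associativity).
Local Notation id := (@idm C).

Definition assocR (A B D : Ob C) : Hm ((A ⊗ B) ⊗ D) (A ⊗ (B ⊗ D)) :=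
  castH Hm eq_refl (tens_assoc A B D) (id ((A ⊗ B) ⊗ D)).
Definition assocL (A B D : Ob C) : Hm (A ⊗ (B ⊗ D)) ((A ⊗ B) ⊗ D) :=
  castH Hm (tens_assoc A B D) eq_refl (id ((A ⊗ B) ⊗ D)).
Definition lunit (A : Ob C) : Hm (I ⊗ A) A :=
  castH Hm eq_refl (tens_unitl A) (id (I ⊗ A)).
Definition lunitinv (A : Ob C) : Hm A (I ⊗ A) :=
  castH Hm (tens_unitl A) eq_refl (id (I ⊗ A)).
Definition runit (A : Ob C) : Hm (A ⊗ I) A :=
  castH Hm eq_refl (tens_unitr A) (id (A ⊗ I)).
Definition runitinv (A : Ob C) : Hm A (A ⊗ I) :=
  castH Hm (tens_unitr A) eq_refl (id (A ⊗ I)).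

(* id (x) sigma (x) id on (X(x)X)(x)(X(x)X) *)
Definition mid_swap (X : Ob C) : Hm ((X ⊗ X) ⊗ (X ⊗ X)) ((X ⊗ X) ⊗ (X ⊗ X)) :=
  assocL X X (X ⊗ X) ∘ tensm (id X) (assocR X X X)
  ∘ tensm (id X) (tensm (sym X X) (id X))
  ∘ tensm (id X) (assocL X X X) ∘ assocR X X (X ⊗ X).

Variable H : Ob C.

Definition is_monoid (m : Hm (H ⊗ H) H) (u : Hm I H) : Prop :=
  (m ∘ tensm m (id H) = m ∘ tensm (id H) m ∘ assocR H H H /\
      m ∘ tensm u (id H) = lunit H /\
      m ∘ tensm (id H) u = runit H).

Definition is_comonoid (d : Hm H (H ⊗ H)) (c : Hm H I) : Prop :=
  (tensm d (id H) ∘ d = assocL H H H ∘ tensm (id H) d ∘ d /\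
      tensm c (id H) ∘ d = lunitinv H /\
      tensm (id H) c ∘ d = runitinv H).

Definition is_frobenius (m : Hm (H ⊗ H) H) (u : Hm I H)
  (d : Hm H (H ⊗ H)) (c : Hm H I) : Prop :=
  (is_monoid m u /\ is_comonoid d c /\
      tensm (id H) m ∘ assocR H H H ∘ tensm d (id H) = d ∘ m /\
      d ∘ m = tensm m (id H) ∘ assocL H H H ∘ tensm (id H) d).

Definition is_hopf (m : Hm (H ⊗ H) H) (u : Hm I H)
  (d : Hm H (H ⊗ H)) (c : Hm H I) (s : Hm H H) : Prop :=
  (is_monoid m u /\ is_comonoid d c /\
      (d ∘ m = tensm m m ∘ mid_swap H ∘ tensm d d /\
          d ∘ u = tensm u u ∘ lunitinv I /\
          c ∘ m = lunit I ∘ tensm c c /\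
          c ∘ u = id I) /\
      m ∘ tensm s (id H) ∘ d = u ∘ c /\ u ∘ c = m ∘ tensm (id H) s ∘ d).

Definition cup (m : Hm (H ⊗ H) H) (c : Hm H I) : Hm (H ⊗ H) I := c ∘ m.
Definition cap (u : Hm I H) (d : Hm H (H ⊗ H)) : Hm I (H ⊗ H) := d ∘ u.

Definition is_pre_hopf_frobenius
  (mg : Hm (H ⊗ H) H) (ug : Hm I H) (dg : Hm H (H ⊗ H)) (cg : Hm H I)
  (mr : Hm (H ⊗ H) H) (ur : Hm I H) (dr : Hm H (H ⊗ H)) (cr : Hm H I)
  (s : Hm H H) : Prop :=
  (is_frobenius mg ug dg cg /\ is_frobenius mr ur dr cr /\
      is_hopf mg ug dr cr s).

Definition is_hopf_frobenius
  (mg : Hm (H ⊗ H) H) (ug : Hm I H) (dg : Hm H (H ⊗ H)) (cg : Hm H I)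
  (mr : Hm (H ⊗ H) H) (ur : Hm I H) (dr : Hm H (H ⊗ H)) (cr : Hm H I)
  (s : Hm H H) : Prop :=
  let s' := lunit H ∘ tensm (cup mg cg) (id H) ∘ assocL H H H
            ∘ tensm (id H) (cap ur dr) ∘ runitinv H in
  (is_pre_hopf_frobenius mg ug dg cg mr ur dr cr s /\
      s = runit H ∘ tensm (id H) (cup mr cr) ∘ assocR H H H
          ∘ tensm (cap ug dg) (id H) ∘ lunitinv H /\
      is_hopf mr ur dg cg s').

End Hopf.

Definition invertible_scalar (C : SMC) (l : Hom C unitO unitO) : Prop :=
  exists l' : Hom C unitO unitO, comp l' l = idm unitO /\ comp l l' = idm unitO.

Definition scale (C : SMC) (A B : Ob C) (l : Hom C unitO unitO) (f : Hom C A B)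
  : Hom C A B := comp (lunit B) (comp (tensm l f) (lunitinv A)).

(* Main.v *)
Require Import Defs.
From Stdlib Require Import ProofIrrelevance.

Section Tk.
Context {C : SMC}.
Local Infix "∘" := comp (at level 50, left associativity).
Local Notation "f ⊗ g" := (tensm f g) (at level 40, left associativity).
Local Notation I := (@unitO C).

Definition cst {A B : Ob C} (e : A = B) : Hom C A B := castH (Hom C) eq_refl e (idm A).

Lemma castH_cst {A A' B B' : Ob C} (e1 : A = A') (e2 : B = B') (f : Hom C A B) :
  castH (Hom C) e1 e2 f = cst e2 ∘ f ∘ cst (eq_sym e1).
Proof. destruct e1, e2; simpl. unfold cst; simpl. now rewrite comp_idl, comp_idr. Qed.

Lemma cst_pi {A B : Ob C} (e e' : A = B) : cst e = cst e'.
Proof. now rewrite (proof_irrelevance _ e e'). Qed.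

Lemma cst_loop {A : Ob C} (e : A = A) : cst e = idm A.
Proof. exact (cst_pi e eq_refl). Qed.

Lemma cst_trans {A B D : Ob C} (e1 : A = B) (e2 : B = D) : cst e2 ∘ cst e1 = cst (eq_trans e1 e2).
Proof. destruct e1, e2; simpl. unfold cst; simpl. now rewrite comp_idl. Qed.

Lemma cst_trans_l {A B D E : Ob C} (X : Hom C D E) (e1 : A = B) (e2 : B = D) :
  X ∘ cst e2 ∘ cst e1 = X ∘ cst (eq_trans e1 e2).
Proof. now rewrite <- comp_assoc, cst_trans. Qed.

Lemma cst_tt {A B A' B' : Ob C} (e1 : A = B) (e2 : A' = B') :
  cst e1 ⊗ cst e2 = cst (f_equal2 tens e1 e2).
Proof. destruct e1, e2. transitivity (idm (tens A A')). apply tensm_id. symmetry. apply cst_loop. Qed.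

Lemma cst_it {A A' B : Ob C} (e2 : A' = B) :
  idm A ⊗ cst e2 = cst (f_equal (tens A) e2).
Proof. destruct e2. transitivity (idm (tens A A')). apply tensm_id. symmetry. apply cst_loop. Qed.

Lemma cst_ti {A A' B : Ob C} (e1 : A = B) :
  cst e1 ⊗ idm A' = cst (f_equal (fun X => tens X A') e1).
Proof. destruct e1. transitivity (idm (tens A A')). apply tensm_id. symmetry. apply cst_loop. Qed.

Lemma aR_c A B D : assocR A B D = cst (tens_assoc A B D).
Proof. reflexivity. Qed.
Lemma aL_c A B D : assocL A B D = cst (eq_sym (tens_assoc A B D)).
Proof. unfold assocL. rewrite castH_cst. unfold cst at 1; simpl. now rewrite comp_idl, comp_idl. Qed.
Lemma lu_c A : lunit A = cst (tens_unitl A).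
Proof. reflexivity. Qed.
Lemma lui_c A : lunitinv A = cst (eq_sym (tens_unitl A)).
Proof. unfold lunitinv. rewrite castH_cst. unfold cst at 1; simpl. now rewrite comp_idl, comp_idl. Qed.
Lemma ru_c A : runit A = cst (tens_unitr A).
Proof. reflexivity. Qed.
Lemma rui_c A : runitinv A = cst (eq_sym (tens_unitr A)).
Proof. unfold runitinv. rewrite castH_cst. unfold cst at 1; simpl. now rewrite comp_idl, comp_idl. Qed.

Ltac coh :=
  rewrite ?aR_c, ?aL_c, ?lu_c, ?lui_c, ?ru_c, ?rui_c;
  rewrite ?cst_tt, ?cst_it, ?cst_ti, ?tensm_id, ?comp_idl, ?comp_idr;
  repeat (rewrite ?cst_trans, ?cst_trans_l);
  first [ apply cst_pi | apply (cst_pi _ eq_refl) | symmetry; apply (cst_pi _ eq_refl) ].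

Lemma ctx2 {A B D Z : Ob C} {a : Hom C B D} {b : Hom C A B} {r : Hom C A D} (E : a ∘ b = r) (X : Hom C D Z) :
  X ∘ a ∘ b = X ∘ r.
Proof. now rewrite <- comp_assoc, E. Qed.
Lemma ctx3 {A B D F Z : Ob C} {a : Hom C D F} {b : Hom C B D} {c : Hom C A B} {r : Hom C A F}
  (E : a ∘ b ∘ c = r) (X : Hom C F Z) : X ∘ a ∘ b ∘ c = X ∘ r.
Proof. now rewrite <- E, !comp_assoc. Qed.

Lemma ctx4 {A B D F G Z : Ob C} {a : Hom C F G} {b : Hom C D F} {c : Hom C B D} {d : Hom C A B} {r : Hom C A G}
  (E : a ∘ b ∘ c ∘ d = r) (X : Hom C G Z) : X ∘ a ∘ b ∘ c ∘ d = X ∘ r.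
Proof. now rewrite <- E, !comp_assoc. Qed.

Lemma tc {A B D A' B' D'} (f : Hom C A B) (g : Hom C B D) (f' : Hom C A' B') (g' : Hom C B' D') :
  (g ⊗ g') ∘ (f ⊗ f') = (g ∘ f) ⊗ (g' ∘ f').
Proof. now rewrite tensm_comp. Qed.

Lemma split_l {A B A' B'} (f : Hom C A B) (g : Hom C A' B') : f ⊗ g = (f ⊗ idm B') ∘ (idm A ⊗ g).
Proof. now rewrite tc, comp_idl, comp_idr. Qed.
Lemma split_r {A B A' B'} (f : Hom C A B) (g : Hom C A' B') : f ⊗ g = (idm B ⊗ g) ∘ (f ⊗ idm A').
Proof. now rewrite tc, comp_idl, comp_idr. Qed.

Lemma N_aR {A B D A' B' D'} (f : Hom C A A') (g : Hom C B B') (h : Hom C D D') :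
  assocR A' B' D' ∘ (f ⊗ g ⊗ h) = f ⊗ (g ⊗ h) ∘ assocR A B D.
Proof.
  rewrite <- (tensm_assoc f g h), castH_cst, !aR_c, cst_trans_l, cst_loop, comp_idr. reflexivity.
Qed.
Lemma N_aL {A B D A' B' D'} (f : Hom C A A') (g : Hom C B B') (h : Hom C D D') :
  assocL A' B' D' ∘ (f ⊗ (g ⊗ h)) = f ⊗ g ⊗ h ∘ assocL A B D.
Proof.
  rewrite <- (tensm_assoc f g h), castH_cst, !aL_c, !comp_assoc, cst_trans, cst_loop, comp_idl.
  reflexivity.
Qed.
Lemma N_lu {A B} (f : Hom C A B) : lunit B ∘ (idm I ⊗ f) = f ∘ lunit A.
Proof.
  transitivity (castH (Hom C) (tens_unitl A) (tens_unitl B) (idm I ⊗ f) ∘ lunit A); [| now rewrite tensm_unitl].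
  rewrite castH_cst, !lu_c, cst_trans_l, cst_loop, comp_idr. reflexivity.
Qed.
Lemma N_lui {A B} (f : Hom C A B) : (idm I ⊗ f) ∘ lunitinv A = lunitinv B ∘ f.
Proof.
  transitivity (lunitinv B ∘ castH (Hom C) (tens_unitl A) (tens_unitl B) (idm I ⊗ f)); [| now rewrite tensm_unitl].
  rewrite castH_cst, !lui_c, !comp_assoc, cst_trans, cst_loop, comp_idl. reflexivity.
Qed.
Lemma N_ru {A B} (f : Hom C A B) : runit B ∘ (f ⊗ idm I) = f ∘ runit A.
Proof.
  transitivity (castH (Hom C) (tens_unitr A) (tens_unitr B) (f ⊗ idm I) ∘ runit A); [| now rewrite tensm_unitr].
  rewrite castH_cst, !ru_c, cst_trans_l, cst_loop, comp_idr. reflexivity.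
Qed.
Lemma N_rui {A B} (f : Hom C A B) : (f ⊗ idm I) ∘ runitinv A = runitinv B ∘ f.
Proof.
  transitivity (runitinv B ∘ castH (Hom C) (tens_unitr A) (tens_unitr B) (f ⊗ idm I)); [| now rewrite tensm_unitr].
  rewrite castH_cst, !rui_c, !comp_assoc, cst_trans, cst_loop, comp_idl. reflexivity.
Qed.
Lemma unitl_eq {A B} (f : Hom C A B) : idm I ⊗ f = lunitinv B ∘ f ∘ lunit A.
Proof. rewrite <- comp_assoc, <- N_lu, comp_assoc. replace (lunitinv B ∘ lunit B) with (idm (tens I B)) by coh. now rewrite comp_idl. Qed.
Lemma unitr_eq {A B} (f : Hom C A B) : f ⊗ idm I = runitinv B ∘ f ∘ runit A.
Proof. rewrite <- comp_assoc, <- N_ru, comp_assoc. replace (runitinv B ∘ runit B) with (idm (tens B I)) by coh. now rewrite comp_idl. Qed.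
End Tk.

Ltac coh :=
  rewrite ?aR_c, ?aL_c, ?lu_c, ?lui_c, ?ru_c, ?rui_c;
  rewrite ?cst_tt, ?cst_it, ?cst_ti, ?tensm_id, ?comp_idl, ?comp_idr;
  repeat (rewrite ?cst_trans, ?cst_trans_l);
  first [ apply cst_pi | apply (cst_pi _ eq_refl) | symmetry; apply (cst_pi _ eq_refl) ].

Section Coh.
Context {C : SMC}.
Local Infix "∘" := comp (at level 50, left associativity).
Local Notation "f ⊗ g" := (tensm f g) (at level 40, left associativity).
Local Notation I := (@unitO C).
Lemma tcl {A B D E : Ob C} (f : Hom C A B) (g : Hom C B D) : (g ∘ f) ⊗ idm E = (g ⊗ idm E) ∘ (f ⊗ idm E).
Proof. now rewrite <- tensm_comp, comp_idl. Qed.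
Lemma tcr {A B D E : Ob C} (f : Hom C A B) (g : Hom C B D) : idm E ⊗ (g ∘ f) = (idm E ⊗ g) ∘ (idm E ⊗ f).
Proof. now rewrite <- tensm_comp, comp_idl. Qed.
Lemma k_lui_t (A B : Ob C) : lunitinv A ⊗ idm B = assocL I A B ∘ lunitinv (tens A B).
Proof. coh. Qed.
Lemma k_pent (A B D E : Ob C) : (assocR A B D ⊗ idm E) ∘ assocL (tens A B) D E = assocL A (tens B D) E ∘ (idm A ⊗ assocL B D E) ∘ assocR A B (tens D E).
Proof. coh. Qed.
Lemma k_ru_aL (A B : Ob C) : (runit A ⊗ idm B) ∘ assocL A I B = idm A ⊗ lunit B.
Proof. coh. Qed.
Lemma k_id_ru (A B : Ob C) : (idm A ⊗ runit B) ∘ assocR A B I = runit (tens A B).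
Proof. coh. Qed.
Lemma k_id_lui (A B : Ob C) : idm A ⊗ lunitinv B = assocR A I B ∘ (runitinv A ⊗ idm B).
Proof. coh. Qed.
Lemma k_pent2 (A B D E : Ob C) : (idm A ⊗ assocR B D E) ∘ assocR A (tens B D) E = assocR A B (tens D E) ∘ assocR (tens A B) D E ∘ (assocL A B D ⊗ idm E).
Proof. coh. Qed.
Lemma k_lu_aR (A B : Ob C) : lunit (tens A B) ∘ assocR I A B = lunit A ⊗ idm B.
Proof. coh. Qed.
Lemma k_luI_aL (B : Ob C) : (lunit I ⊗ idm B) ∘ assocL I I B = idm I ⊗ lunit B.
Proof. coh. Qed.
Lemma k_c10 (A : Ob C) : (runit A ⊗ idm I) ∘ assocL A I I ∘ (idm A ⊗ lunitinv I) ∘ runitinv A = runitinv A.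
Proof. coh. Qed.
Lemma k_aL_rui (A B : Ob C) : assocL A B I ∘ (idm A ⊗ runitinv B) = runitinv (tens A B).
Proof. coh. Qed.
Lemma k_lu_aL (A B : Ob C) : (lunit A ⊗ idm B) ∘ assocL I A B = lunit (tens A B).
Proof. coh. Qed.
Lemma k_ruI : runit I = lunit I.
Proof. coh. Qed.
Lemma k_ruiI : runitinv I = lunitinv I.
Proof. coh. Qed.
Lemma k_lu_lui (A : Ob C) : lunit A ∘ lunitinv A = idm A.
Proof. coh. Qed.
Lemma k_lui_lu (A : Ob C) : lunitinv A ∘ lunit A = idm _.
Proof. coh. Qed.
Lemma k_ru_rui (A : Ob C) : runit A ∘ runitinv A = idm A.
Proof. coh. Qed.
Lemma k_rui_ru (A : Ob C) : runitinv A ∘ runit A = idm _.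
Proof. coh. Qed.
Lemma k_ru_lui : runit I ∘ lunitinv I = idm I.
Proof. coh. Qed.
Lemma k_lu_rui : lunit I ∘ runitinv I = idm I.
Proof. coh. Qed.
Lemma k_aR_lui (A B : Ob C) : assocR I A B ∘ (lunitinv A ⊗ idm B) = lunitinv (tens A B).
Proof. coh. Qed.
End Coh.

Tactic Notation "rw" open_constr(E) := first [erewrite E | erewrite (ctx2 E) | erewrite (ctx3 E) | erewrite (ctx4 E) | erewrite (ctx2 (E _)) | erewrite (ctx3 (E _)) | erewrite (ctx4 (E _)) | erewrite (ctx2 (E _ _)) | erewrite (ctx3 (E _ _)) | erewrite (ctx4 (E _ _)) | erewrite (ctx2 (E _ _ _)) | erewrite (ctx3 (E _ _ _)) | erewrite (ctx4 (E _ _ _)) | erewrite (ctx2 (E _ _ _ _)) | erewrite (ctx3 (E _ _ _ _)) | erewrite (ctx4 (E _ _ _ _))]; rewrite ?comp_assoc.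
Tactic Notation "rwi" open_constr(E) hyp(h) := first [erewrite E in h | erewrite (ctx2 E) in h | erewrite (ctx3 E) in h | erewrite (ctx4 E) in h | erewrite (ctx2 (E _)) in h | erewrite (ctx3 (E _)) in h | erewrite (ctx4 (E _)) in h | erewrite (ctx2 (E _ _)) in h | erewrite (ctx3 (E _ _)) in h | erewrite (ctx4 (E _ _)) in h | erewrite (ctx2 (E _ _ _)) in h | erewrite (ctx3 (E _ _ _)) in h | erewrite (ctx4 (E _ _ _)) in h | erewrite (ctx2 (E _ _ _ _)) in h | erewrite (ctx3 (E _ _ _ _)) in h | erewrite (ctx4 (E _ _ _ _)) in h]; rewrite ?comp_assoc in h.

Section Gen.
Variable C : SMC.
Local Infix "∘" := comp (at level 50, left associativity).
Local Notation "f ⊗ g" := (tensm f g) (at level 40, left associativity).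
Local Notation I := (@unitO C).
Variable H : Ob C.
Variables (mu : Hom C (tens H H) H) (eta : Hom C I H) (Delta : Hom C H (tens H H))
  (eps : Hom C H I) (s : Hom C H H).
Hypothesis HH : is_hopf mu eta Delta eps s.

Lemma G1 : s ∘ eta = eta.
Proof.
  destruct HH as [[mA [mL mR]] [[cA [cL cR]] [[b1 [b2 [b3 b4]]] [a1 a2]]]].
  assert (E : mu ∘ (s ⊗ idm H) ∘ Delta ∘ eta = eta) by (rewrite a1, <- comp_assoc, b4, comp_idr; reflexivity).
  rewrite <- comp_assoc, b2, !comp_assoc in E.
  rwi (tc _ _ _ _) E.
  rewrite comp_idl, (split_r (s ∘ eta) eta), comp_assoc, mR in E.
  rwi (N_ru _) E.
  rewrite <- comp_assoc in E.
  replace (runit I ∘ lunitinv I) with (idm I) in E by coh.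
  now rewrite comp_idr in E.
Qed.
Lemma G2 : eps ∘ s = eps.
Proof.
  destruct HH as [[mA [mL mR]] [[cA [cL cR]] [[b1 [b2 [b3 b4]]] [a1 a2]]]].
  assert (E : eps ∘ (mu ∘ (s ⊗ idm H) ∘ Delta) = eps) by (rewrite a1, comp_assoc, b4, comp_idl; reflexivity).
  rewrite !comp_assoc, b3 in E.
  rwi (tc _ _ _ _) E.
  rewrite comp_idr, (split_l (eps ∘ s) eps), !comp_assoc in E.
  rwi cR E. rwi (N_rui _) E.
  rewrite ?comp_assoc in E.
  replace (lunit I ∘ runitinv I) with (idm I) in E by coh.
  now rewrite comp_idl in E.
Qed.

Section Partner.
Variables (dg : Hom C H (tens H H)) (eg : Hom C H I) (mr : Hom C (tens H H) H) (er : Hom C I H).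
Hypothesis HF : is_hopf_frobenius mu eta dg eg mr er Delta eps s.

Ltac unp :=
  let HF' := fresh in pose proof HF as HF';
  unfold is_hopf_frobenius, is_pre_hopf_frobenius, is_frobenius, is_hopf, is_monoid, is_comonoid, cup, cap in HF';
  cbv zeta in HF';
  destruct HF' as [[[[gmA [gmL gmR]] [[gcA [gcL gcR]] [gF1 gF2]]] [[[rmA [rmL rmR]] [[rcA [rcL rcR]] [rF1 rF2]]] _]]
                   [sF [[hmA [hmL hmR]] [[hcA [hcL hcR]] [[hb1 [hb2 [hb3 hb4]]] [ha1 ha2]]]]]].

Lemma P4 : lunit H ∘ ((eps ∘ mr) ⊗ idm H) ∘ assocL H H H ∘ (idm H ⊗ (Delta ∘ er)) = runit H.
Proof.
  unp. rewrite tcl, tcr, !comp_assoc. rw (eq_sym rF2). rw rcL. rw rmR. rw k_lu_lui. now rewrite comp_idl.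
Qed.

Lemma P5 : lunit H ∘ ((eg ∘ mu) ⊗ idm H) ∘ assocL H H H ∘ (idm H ⊗ (dg ∘ eta)) = runit H.
Proof.
  unp. rewrite tcl, tcr, !comp_assoc. rw (eq_sym gF2). rw gcL. rw gmR. rw k_lu_lui. now rewrite comp_idl.
Qed.

Lemma M1 : mr = lunit H ∘ ((eps ∘ mr) ⊗ idm H) ∘ assocL H H H ∘ (idm H ⊗ Delta).
Proof.
  unp. rewrite tcl, !comp_assoc. rw (eq_sym rF2). rw rcL. rw k_lu_lui. now rewrite comp_idl.
Qed.

Lemma D1 : dg = (idm H ⊗ mu) ∘ assocR H H H ∘ ((dg ∘ eta) ⊗ idm H) ∘ lunitinv H.
Proof.
  unp. rewrite tcl, !comp_assoc. rw gF1. rw gmL. rw k_lu_lui. now rewrite comp_idr.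
Qed.

Lemma D2 : dg = (mu ⊗ idm H) ∘ assocL H H H ∘ (idm H ⊗ (dg ∘ eta)) ∘ runitinv H.
Proof.
  unp. rewrite tcr, !comp_assoc. rw (eq_sym gF2). rw gmR. rw k_ru_rui. now rewrite comp_idr.
Qed.

Lemma P8 : dg ∘ eta = (s ⊗ idm H) ∘ Delta ∘ er.
Proof.
  pose proof P4 as Hs. unp.
  rewrite <- comp_assoc, sF.
  set (dG := dg ∘ eta) in *. set (eR := eps ∘ mr) in *. set (dR := Delta ∘ er) in *.
  clearbody dG eR dR.
  rewrite !tcl, ?comp_assoc.
  rewrite k_lui_t, ?comp_assoc.
  rw (eq_sym (N_lui dR)).
  rw (eq_sym (N_aL dG (idm H) (idm H))). rewrite tensm_id.
  rw (tc (idm I) dG dR (idm (tens H H))). rewrite comp_idl, comp_idr, (split_r dG dR), ?comp_assoc.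
  rw k_pent.
  rw (eq_sym (N_aL (idm H) eR (idm H))).
  rw k_ru_aL.
  rewrite <- (tensm_id H H).
  rw (N_aR (idm H) (idm H) dR).
  do 3 rw (tc _ _ _ _). rewrite ?comp_idl, Hs.
  rw k_id_ru. rw (N_ru dG). rw k_ru_lui. now rewrite comp_idr.
Qed.
Lemma P9 : eps ∘ mr = eg ∘ mu ∘ (idm H ⊗ s).
Proof.
  pose proof P5 as Hs. unp.
  rewrite sF.
  set (dG := dg ∘ eta) in *. set (eR := eps ∘ mr) in *. set (eG := eg ∘ mu) in *.
  clearbody dG eR eG.
  rewrite !tcr, ?comp_assoc.
  rewrite k_id_lui, ?comp_assoc.
  rw (eq_sym (N_aR (idm H) dG (idm H))).
  rw k_pent2.
  rw (eq_sym (N_aR (idm H) (idm H) eR)).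
  rw k_id_ru.
  rw (eq_sym (N_ru eG)).
  rewrite tensm_id.
  rw (tc (idm (tens H H)) eG eR (idm I)). rewrite comp_idl, comp_idr, (split_r eG eR), ?comp_assoc.
  rewrite unitl_eq, ?comp_assoc. rewrite k_ru_lui, comp_idl.
  rewrite <- (tensm_id H H).
  rw (eq_sym (N_aR eG (idm H) (idm H))).
  rw k_lu_aR.
  do 4 rw (tc _ _ _ _). rewrite ?comp_idl, Hs, k_ru_rui, tensm_id, comp_idr. reflexivity.
Qed.
Lemma P6 : eps ∘ mr ∘ (idm H ⊗ eta) = eg ∘ runit H.
Proof.
  pose proof G1 as g1. unp. rewrite P9. rw (tc _ _ _ _). rewrite comp_idl, g1. now rw gmR.
Qed.

Lemma P7 : (eps ⊗ idm H) ∘ dg ∘ eta = lunitinv H ∘ er.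
Proof.
  pose proof G2 as g2. unp. rewrite <- comp_assoc, P8, ?comp_assoc. rw (tc _ _ _ _). now rewrite comp_idl, g2, rcL.
Qed.

Lemma M2 : mr = runit H ∘ (idm H ⊗ (eps ∘ mr)) ∘ assocR H H H ∘ (Delta ⊗ idm H).
Proof.
  unp. rewrite tcr, ?comp_assoc. rw rF1. rw rcR. rw k_ru_rui. now rewrite comp_idl.
Qed.

Lemma P1 : runit H ∘ (idm H ⊗ eg) ∘ Delta = eta ∘ eg.
Proof.
  pose proof P6 as h6. pose proof M1 as m1. pose proof M2 as m2.
  destruct HH as [[mA [mL mR]] [[cA [cL cR]] [[b1 [b2 [b3 b4]]] [a1 a2]]]].
  set (eR := eps ∘ mr) in *. clearbody eR.
  assert (E := f_equal (fun k => k ∘ (idm H ⊗ eta) ∘ runitinv H) (eq_trans (eq_sym m1) m2)).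
  cbv beta in E. rewrite ?comp_assoc in E.
  rwi (tc _ _ _ _) E. rewrite comp_idl, b2, tcr, ?comp_assoc in E.
  rwi (N_aL (idm H) eta eta) E.
  rwi (tc _ _ _ _) E. rewrite comp_idl, h6, (split_r (eg ∘ runit H) eta), ?comp_assoc in E.
  rwi (N_lu eta) E. rewrite tcl, ?comp_assoc in E.
  rwi k_c10 E. rwi (N_rui eg) E. rwi k_lu_rui E. rewrite comp_idr in E.
  rwi (tc _ _ _ _) E. rewrite comp_idl, comp_idr, (split_r Delta eta), ?comp_assoc in E.
  rewrite <- (tensm_id H H) in E.
  rwi (N_aR (idm H) (idm H) eta) E.
  rwi (tc _ _ _ _) E. rewrite comp_idl, h6, tcr, ?comp_assoc in E.
  rwi k_id_ru E. rwi (N_ru Delta) E. rwi k_ru_rui E. rewrite comp_idr in E.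
  now symmetry.
Qed.
Lemma P2 : mu ∘ (er ⊗ idm H) ∘ lunitinv H = er ∘ eps.
Proof.
  pose proof P7 as h7. pose proof D1 as d1. pose proof D2 as d2.
  destruct HH as [[mA [mL mR]] [[cA [cL cR]] [[b1 [b2 [b3 b4]]] [a1 a2]]]].
  assert (E := eq_trans (eq_sym (f_equal (fun k => (eps ⊗ idm H) ∘ k) d1)) (f_equal (fun k => (eps ⊗ idm H) ∘ k) d2)).
  cbv beta in E. rewrite ?comp_assoc in E.
  rwi (tc _ _ _ _) E. rewrite comp_idl, comp_idr, (split_r eps mu) in E.
  rewrite <- (tensm_id H H), ?comp_assoc in E.
  rwi (eq_sym (N_aR eps (idm H) (idm H))) E.
  rwi (tc (dg ∘ eta) _ (idm H) _) E. rewrite ?comp_assoc, h7, comp_idl, tcl, ?comp_assoc in E.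
  rwi k_aR_lui E. rwi (N_lui mu) E.
  rwi (tc _ _ _ _) E. rewrite comp_idl, b3, tcl, ?comp_assoc in E.
  rwi (eq_sym (N_aL eps eps (idm H))) E.
  rwi k_luI_aL E.
  rwi (tc _ _ _ _) E. rwi (tc _ _ _ _) E. rewrite ?comp_idl, ?comp_idr in E.
  rwi h7 E. rwi k_lu_lui E. rewrite comp_idl, (split_r eps er), ?comp_assoc in E.
  rwi (N_rui eps) E. rewrite k_ruiI in E. rwi (N_lui er) E.
  apply (f_equal (comp (lunit H))) in E. rewrite ?comp_assoc, k_lu_lui, ?comp_idl in E.
  exact E.
Qed.
Lemma P1' : (idm H ⊗ eg) ∘ Delta = runitinv H ∘ eta ∘ eg.
Proof. rewrite <- comp_assoc, <- P1, ?comp_assoc, k_rui_ru, comp_idl. reflexivity. Qed.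

Lemma P2' : mu ∘ (er ⊗ idm H) = er ∘ eps ∘ lunit H.
Proof. rewrite <- P2, <- comp_assoc, k_lui_lu, comp_idr. reflexivity. Qed.

Lemma P3 : eg ∘ er = idm I.
Proof. unp. exact hb4. Qed.
End Partner.

Section Two.
Variables (dg : Hom C H (tens H H)) (eg : Hom C H I) (mr : Hom C (tens H H) H) (er : Hom C I H).
Hypothesis HF : is_hopf_frobenius mu eta dg eg mr er Delta eps s.
Variables (dg2 : Hom C H (tens H H)) (eg2 : Hom C H I) (mr2 : Hom C (tens H H) H) (er2 : Hom C I H).
Hypothesis HF2 : is_hopf_frobenius mu eta dg2 eg2 mr2 er2 Delta eps s.

Lemma cross_eg (a : Hom C I I) (Ha : eg2 ∘ er = a) : eg2 = a ∘ eg.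
Proof.
  pose proof (P4 _ _ _ _ HF) as h4. pose proof (P1' _ _ _ _ HF2) as h1. pose proof (P6 _ _ _ _ HF) as h6.
  assert (E : eg2 ∘ runit H ∘ runitinv H = eg2) by (rewrite <- comp_assoc, k_ru_rui; apply comp_idr).
  rewrite <- h4, ?comp_assoc in E.
  rwi (eq_sym (N_lu eg2)) E.
  rwi (tc _ _ _ _) E. rewrite comp_idl, comp_idr, (split_l (eps ∘ mr) eg2), ?comp_assoc in E.
  rewrite <- (tensm_id H H) in E.
  rwi (eq_sym (N_aL (idm H) (idm H) eg2)) E.
  rwi (tc _ _ _ _) E. rewrite comp_idl in E.
  rwi h1 E. rwi Ha E. rewrite !tcr, ?comp_assoc in E.
  rwi k_aL_rui E. rwi (N_rui (eps ∘ mr)) E. rwi k_lu_rui E. rewrite comp_idl in E.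
  rwi h6 E. rwi (eq_sym (N_ru eg)) E.
  rwi (tc _ _ _ _) E. rewrite comp_idl, comp_idr, (split_r eg a), ?comp_assoc in E.
  rwi (N_rui eg) E. rewrite unitl_eq, ?comp_assoc in E.
  rwi k_ru_lui E. rwi k_lu_rui E. rewrite comp_idl, comp_idr in E.
  now symmetry.
Qed.

Lemma cross_er (b : Hom C I I) (Hb : eg ∘ er2 = b) : er2 = er ∘ b.
Proof.
  pose proof (P5 _ _ _ _ HF) as h5. pose proof (P2' _ _ _ _ HF2) as h2. pose proof (P7 _ _ _ _ HF) as h7.
  assert (E : runit H ∘ runitinv H ∘ er2 = er2) by (rewrite k_ru_rui; apply comp_idl).
  rewrite <- h5, ?comp_assoc in E.
  rwi (eq_sym (N_rui er2)) E.
  rwi (tc _ _ _ _) E. rewrite comp_idl, comp_idr, (split_l er2 (dg ∘ eta)), ?comp_assoc in E.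
  rewrite <- (tensm_id H H) in E.
  rwi (N_aL er2 (idm H) (idm H)) E.
  rwi (tc _ _ _ _) E. rewrite comp_idl in E.
  rwi h2 E. rwi Hb E. rewrite !tcl, ?comp_assoc in E.
  rwi k_lu_aL E. rwi (N_lu (dg ∘ eta)) E. rwi h7 E. rwi k_lu_rui E. rewrite comp_idr in E.
  rwi (eq_sym (N_lui er)) E.
  rwi (tc _ _ _ _) E. rewrite comp_idl, comp_idr, (split_r b er), ?comp_assoc in E.
  rwi (N_lu er) E. rewrite unitr_eq, ?comp_assoc in E.
  rwi k_lu_rui E. rwi k_ru_lui E. rewrite !comp_idr in E.
  now symmetry.
Qed.
End Two.
End Gen.

Section Sc.
Context {C : SMC}.
Local Infix "∘" := comp (at level 50, left associativity).
Local Notation "f ⊗ g" := (tensm f g) (at level 40, left associativity).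
Local Notation I := (@unitO C).

Lemma S1 {A} (l : Hom C I I) (f : Hom C A I) : scale l f = l ∘ f.
Proof.
  unfold scale. rewrite comp_assoc, (split_l l f), ?comp_assoc.
  rw (N_lui f). rewrite unitr_eq, ?comp_assoc. rw k_lu_rui. rw k_ru_lui. now rewrite comp_idl, comp_idr.
Qed.
Lemma S2 {B} (l : Hom C I I) (f : Hom C I B) : scale l f = f ∘ l.
Proof.
  unfold scale. rewrite comp_assoc, (split_r l f), ?comp_assoc.
  rw (N_lu f). rewrite unitr_eq, ?comp_assoc. rw k_lu_rui. rw k_ru_lui. now rewrite !comp_idr.
Qed.
Lemma S3 {A B} (l : Hom C I I) (f : Hom C A B) : scale l f = f ∘ lunit A ∘ (l ⊗ idm A) ∘ lunitinv A.
Proof.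
  unfold scale. rewrite comp_assoc, (split_r l f), ?comp_assoc. now rw (N_lu f).
Qed.
Lemma S5 {A B} (l : Hom C I I) (g : Hom C A (tens I B)) : scale l (lunit B ∘ g) = lunit B ∘ (l ⊗ idm B) ∘ g.
Proof.
  unfold scale. rewrite comp_assoc, (split_l l (lunit B ∘ g)), ?comp_assoc.
  rw (N_lui (lunit B ∘ g)). rw k_lui_lu. now rewrite comp_idr.
Qed.
End Sc.

Theorem mainTheorem5 (C : SMC) (H : Ob C)
  (mu : Hom C (tens H H) H) (eta : Hom C unitO H)
  (Delta : Hom C H (tens H H)) (eps : Hom C H unitO) (s : Hom C H H)
  (dg : Hom C H (tens H H)) (eg : Hom C H unitO)
  (mr : Hom C (tens H H) H) (er : Hom C unitO H)
  (dg' : Hom C H (tens H H)) (eg' : Hom C H unitO)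
  (mr' : Hom C (tens H H) H) (er' : Hom C unitO H) :
  is_hopf mu eta Delta eps s ->
  is_hopf_frobenius mu eta dg eg mr er Delta eps s ->
  is_hopf_frobenius mu eta dg' eg' mr' er' Delta eps s ->
  exists l1 l2 l3 l4 : Hom C unitO unitO,
    (invertible_scalar l1 /\ invertible_scalar l2 /\
        invertible_scalar l3 /\ invertible_scalar l4) /\
    (dg' = scale l1 dg /\ eg' = scale l2 eg /\
        mr' = scale l3 mr /\ er' = scale l4 er).
Proof.
  intros HH HF1 HF2.
  set (a := comp eg' er). set (b := comp eg er').
  assert (Ea : eg' = comp a eg) by exact (cross_eg _ _ _ _ _ _ _ HH _ _ _ _ HF1 _ _ _ _ HF2 a eq_refl).
  assert (Eb : eg = comp b eg') by exact (cross_eg _ _ _ _ _ _ _ HH _ _ _ _ HF2 _ _ _ _ HF1 b eq_refl).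
  assert (Er : er' = comp er b) by exact (cross_er _ _ _ _ _ _ _ HH _ _ _ _ HF1 _ _ _ _ HF2 b eq_refl).
  assert (ba : comp b a = idm unitO).
  { unfold a. rewrite comp_assoc, <- Eb. exact (P3 _ _ _ _ _ _ _ _ _ _ _ HF1). }
  assert (ab : comp a b = idm unitO).
  { unfold b. rewrite comp_assoc, <- Ea. exact (P3 _ _ _ _ _ _ _ _ _ _ _ HF2). }
  assert (ia : invertible_scalar a) by (exists b; split; assumption).
  assert (ib : invertible_scalar b) by (exists a; split; assumption).
  clearbody a b.
  exists b, a, a, b. split; [repeat split; assumption |].
  split; [| split; [| split]].
  -
    rewrite (D1 _ _ _ _ _ _ _ _ _ _ _ HF2), (P8 _ _ _ _ _ _ _ _ _ _ _ HF2), Er, comp_assoc.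
    rewrite <- (P8 _ _ _ _ _ _ _ _ _ _ _ HF1), tcl, ?comp_assoc.
    rewrite S3.
    assert (d1 := D1 _ _ _ _ _ _ _ _ _ _ _ HF1).
    set (X := comp (comp (tensm (idm H) mu) (assocR H H H)) (tensm (comp dg eta) (idm H))) in *.
    clearbody X. rewrite d1, ?comp_assoc. rw k_lui_lu. now rewrite comp_idr.
  - rewrite S1. exact Ea.
  - rewrite (M1 _ _ _ _ _ _ _ _ _ _ _ HF2), (P9 _ _ _ _ _ _ _ _ _ _ _ HF2), Ea.
    erewrite (ctx3 (eq_sym (P9 _ _ _ _ _ _ _ _ _ _ _ HF1))). rewrite tcl.
    assert (m1 := M1 _ _ _ _ _ _ _ _ _ _ _ HF1).
    set (E := comp eps mr) in *. clearbody E.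
    rewrite m1. rewrite <- !comp_assoc. rewrite S5. now rewrite ?comp_assoc.
  - rewrite S2. exact Er.
Qed.
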